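(* Let $\mathcal{G}=(N,\mathcal{W})$ be an SVG, let $i\neq j$ be players with $j$ a YES-blocker of $\mathcal{G}$, and let $\hat{\mathcal{G}}=\mathcal{G}^{j\to i}$. Let $S\subseteq N\setminus\{i,j\}$ satisfy $S\cup\{i,j\}\notin\mathcal{W}$. Then $$\hat\alpha^-_i(S)\le \alpha^-_i(S)+\alpha^-_j(S),$$ where $\alpha^-$ denotes NO-efficacy scores of the Recursive Measure in $\mathcal{G}$, and $\hat\alpha^-$ denotes the same in $\hat{\mathcal{G}}$.
   Context: A simple voting game (SVG) is a pair $\mathcal{G}=(N,\mathcal{W})$ with $N$ a nonempty finite set of players and $\mathcal{W}\subseteq 2^N$ monotone, $\emptyset\notin\mathcal{W}$, $N\in\mathcal{W}$. Divisions are identified with their YES-sets $S\subseteq N$; $S$ is winning iff $S\in\mathcal{W}$. Decisiveness and success: - Player $k$ is YES-decisive in $S$ if $k\in S\in\mathcal{W}$ and $S\setminus\{k\}\notin\mathcal{W}$. - Player $k$ is NO-decisive in $S$ if $k\notin S\notin\mathcal{W}$ and $S\cup\{k\}\in\mathcal{W}$. - Player $k$ is successful in $S$ if ($k\in S\in\mathcal{W}$) or ($k\notin S\notin\mathcal{W}$). Loyal children: if $S\in\mathcal{W}$, they are the sets $S\setminus\{m\}\in\mathcal{W}$ with $m\in S$. If $S\notin\mathcal{W}$, they are the sets $S\cup\{m\}\notin\mathcal{W}$ with $m\notin S$. Recursive efficacy score $\alpha_k(S)$: - $\alpha_k(S)=1$ if $k$ is YES- or NO-decisive in $S$; - $\alpha_k(S)=0$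 if $k$ is not successful; - otherwise, the average of $\alpha_k$ over the loyal children of $S$. The NO-efficacy score is $\alpha^-_k(S)=\alpha_k(S)$ if $k\notin S$ and $0$ if $k\in S$. Blockers: $j$ is a YES-blocker if $j\in S$ for all $S\in\mathcal{W}$. Donation game: $\mathcal{G}^{j\to i}$ is the SVG on $N$ in which, for $S\subseteq N\setminus\{i,j\}$: - $S\cup\{i,j\}$ and $S\cup\{i\}$ are winning iff $S\cup\{i,j\}\in\mathcal{W}$; - $S\cup\{j\}$ and $S$ are winning iff $S\in\mathcal{W}$. *)

(* Defs.v *)
From HB Require Import structures.
From mathcomp Require Import all_boot all_order all_algebra.
Set Implicit Arguments. Unset Strict Implicit. Unset Printing Implicit Defensive.
Import Order.TTheory GRing.Theory Num.Theory.
Local Open Scope ring_scope.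

Section SVG.
Variable N : finType.

Definition svg (W : {set {set N}}) : Prop :=
  [/\ forall S T : {set N}, S \subset T -> S \in W -> T \in W,
      set0 \notin W & [set: N] \in W].

Definition yes_decisive (W : {set {set N}}) (k : N) (S : {set N}) : bool :=
  [&& k \in S, S \in W & S :\ k \notin W].
Definition no_decisive (W : {set {set N}}) (k : N) (S : {set N}) : bool :=
  [&& k \notin S, S \notin W & k |: S \in W].
Definition successful (W : {set {set N}}) (k : N) (S : {set N}) : bool :=
  (k \in S) && (S \in W) || (k \notin S) && (S \notin W).

(* Loyal children of S, indexed by the player m that switches. *)
Definition loyal_idx (W : {set {set N}}) (S : {set N}) : {set N} :=
  if S \in W then [set m in S | S :\ m \in W]
  else [set m in ~: S | m |: S \notin W].
Definition loyal_child (W : {set {set N}}) (S : {set N}) (m : N) : {set N} :=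
  if S \in W then S :\ m else m |: S.

(* Loyal children of a
   winning set are winning and strictly smaller; loyal children of a losing
   set are losing and strictly larger; hence recursion depth is at most
   #|N| and fuel #|N|.+1 is never exhausted. *)
Fixpoint alpha_fuel (W : {set {set N}}) (k : N) (n : nat) (S : {set N}) : rat :=
  match n with
  | 0 => 0
  | n'.+1 =>
    if yes_decisive W k S || no_decisive W k S then 1
    else if ~~ successful W k S then 0
    else (\sum_(m in loyal_idx W S) alpha_fuel W k n' (loyal_child W S m))
           / #|loyal_idx W S|%:R
  end.

Definition alpha (W : {set {set N}}) (k : N) (S : {set N}) : rat :=
  alpha_fuel W k #|N|.+1 S.

Definition alpha_no (W : {set {set N}}) (k : N) (S : {set N}) : rat :=
  if k \in S then 0 else alpha W k S.

Definition yes_blocker (W : {set {set N}}) (j : N) : Prop :=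
  forall S, S \in W -> j \in S.

Definition donate (W : {set {set N}}) (i j : N) : {set {set N}} :=
  [set T : {set N} |
     let S0 := T :\: [set i; j] in
     if i \in T then S0 :|: [set i; j] \in W else S0 \in W].

End SVG.

(* Main.v *)
Require Import Defs.
From mathcomp Require Import all_boot all_order all_algebra.
From mathcomp Require Import ring lra.
Import Order.TTheory GRing.Theory Num.Theory.
Local Open Scope ring_scope.

Section Aux.
Variable N : finType.
Implicit Types (W : {set {set N}}) (S T : {set N}).

Lemma cardC_add (x : N) S : x \notin S -> #|~: S| = (#|~: (x |: S)|).+1.
Proof.
move=> xS; rewrite (cardsD1 x (~: S)) inE xS add1n; congr (_.+1).
by apply: eq_card => y; rewrite !inE negb_or andbC.
Qed.

Lemma alpha_fuelE W k n m S : S \notin W -> (#|~: S| < n)%N -> (#|~: S| < m)%N ->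
  alpha_fuel W k n S = alpha_fuel W k m S.
Proof.
elim: n m S => [|n IH] [|m] S SW //= hn hm.
rewrite /loyal_idx /loyal_child (negbTE SW).
case: ifP => // _; case: ifP => // _.
congr (_ / _); apply: eq_bigr => x; rewrite inE => /andP[xS xW].
rewrite inE in xS.
have e := @cardC_add x S xS.
by apply: IH => //; rewrite -ltnS -e.
Qed.

Lemma alpha_fuelS W k n S : alpha_fuel W k n.+1 S =
    if yes_decisive W k S || no_decisive W k S then 1
    else if ~~ successful W k S then 0
    else (\sum_(m in loyal_idx W S) alpha_fuel W k n (loyal_child W S m))
           / #|loyal_idx W S|%:R.
Proof. by []. Qed.

Lemma alpha_rec W k S : S \notin W -> alpha W k S =
  if (k \notin S) && (k |: S \in W) then 1 else if k \in S then 0 else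
  (\sum_(m in [set m in ~: S | m |: S \notin W]) alpha W k (m |: S))
     / #|[set m in ~: S | m |: S \notin W]|%:R.
Proof.
move=> SW; rewrite {1}/alpha alpha_fuelS /yes_decisive /no_decisive /successful.
rewrite /loyal_idx /loyal_child (negbTE SW) /= !andbF /= !andbT.
case: (k \in S) => //=; case: (k |: S \in W) => //=.
congr (_ / _); apply: eq_bigr => x; rewrite inE => /andP[xS xW].
rewrite inE in xS.
have e := @cardC_add x S xS.
have := max_card (mem (~: S)); rewrite e => h.
by apply: alpha_fuelE => //; apply: ltnW.
Qed.

Lemma alpha_dec W k S : k \notin S -> S \notin W -> k |: S \in W -> alpha W k S = 1.
Proof. by move=> kS SW kW; rewrite alpha_rec // kS kW. Qed.

Lemma alpha_uns W k S : k \in S -> S \notin W -> alpha W k S = 0.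
Proof. by move=> kS SW; rewrite alpha_rec // kS. Qed.

Lemma alpha_all W k S : S \notin W -> k \notin S -> k |: S \notin W ->
  (forall m, m \notin S -> m |: S \notin W) ->
  alpha W k S = (\sum_(m in ~: S) alpha W k (m |: S)) / #|~: S|%:R.
Proof.
move=> SW kS kW H; rewrite alpha_rec // kS (negbTE kW) /= (negbTE kS).
have -> : [set m in ~: S | m |: S \notin W] = ~: S.
  by apply/setP => x; rewrite !inE; case xS: (x \in S) => //=; apply: H; rewrite xS.
by [].
Qed.

Lemma alpha_bounds W k n S : 0 <= alpha_fuel W k n S <= 1.
Proof.
elim: n S => [|n IH] S /=; first by rewrite ?lexx ?ler01.
case: ifP => _; first by rewrite ?lexx ?ler01.
case: ifP => _; first by rewrite ?lexx ?ler01.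
set L := loyal_idx W S.
have h0 : 0 <= \sum_(m in L) alpha_fuel W k n (loyal_child W S m).
  by apply: sumr_ge0 => m _; case/andP: (IH (loyal_child W S m)).
have h1 : \sum_(m in L) alpha_fuel W k n (loyal_child W S m) <= #|L|%:R.
  rewrite -sum1_card natr_sum; apply: ler_sum => m _.
  by case/andP: (IH (loyal_child W S m)).
apply/andP; split; first by apply: divr_ge0.
case: (posnP #|L|) => [->|hp]; first by rewrite invr0 mulr0 ler01.
by rewrite ler_pdivrMr ?ltr0n // mul1r.
Qed.

Lemma alpha_ge0 W k S : 0 <= alpha W k S.
Proof. by case/andP: (alpha_bounds W k #|N|.+1 S). Qed.
Lemma alpha_le1 W k S : alpha W k S <= 1.
Proof. by case/andP: (alpha_bounds W k #|N|.+1 S). Qed.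

End Aux.
Section Main.
Variable N : finType.
Variable W : {set {set N}}.
Variables i j : N.
Hypothesis hW : svg W.
Hypothesis hij : i != j.
Hypothesis hblk : yes_blocker W j.
Local Notation Wh := (donate W i j).
Local Notation IJ := [set i; j].
Implicit Types (T U X : {set N}).

Lemma blk T : j \notin T -> T \notin W.
Proof. by move=> jT; apply/negP => /hblk; rewrite (negbTE jT). Qed.

Lemma subW (A B : {set N}) : A \subset B -> B \notin W -> A \notin W.
Proof.
case: hW => mono _ _ sAB; apply: contra; exact: mono.
Qed.

Lemma monoW (A B : {set N}) : A \subset B -> A \in W -> B \in W.
Proof. by case: hW => mono _ _; apply: mono. Qed.

Lemma Wh_mem T : (T \in Wh) = (i \in T) && (T :|: IJ \in W).
Proof.
rewrite /donate inE /=; case iT: (i \in T) => /=.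
  congr (_ \in W); apply/setP => x; rewrite !inE.
  by case: (x == i); case: (x == j); case: (x \in T).
by apply/negbTE; apply: blk; rewrite !inE eqxx orbT.
Qed.

Lemma loyalWh X m : i \notin X -> X :|: IJ \notin W -> m |: X \notin Wh.
Proof.
move=> iX XW; rewrite Wh_mem; apply/negP => /andP[h1 h2].
rewrite !inE (negbTE iX) orbF in h1.
move/eqP: h1 => h1; rewrite -h1 in h2.
move: h2; apply/negP; move: XW; apply: contra; apply: monoW.
apply/subsetP => x; rewrite !inE.
by case: (x == i); case: (x == j); case: (x \in X).
Qed.

Lemma loyalW X m : j \notin X -> X :|: IJ \notin W -> m |: X \notin W.
Proof.
move=> jX XW; case: (eqVneq m j) => [->|mj].
  apply: subW XW; apply/subsetP => x; rewrite !inE.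
  by case: (x == i); case: (x == j); case: (x \in X).
by apply: blk; rewrite !inE negb_or eq_sym mj jX.
Qed.

Lemma split2 (F : N -> rat) (A : {set N}) : i \in A -> j \in A ->
  \sum_(m in A) F m = F i + F j + \sum_(m in A :\ i :\ j) F m
  /\ #|A| = (#|A :\ i :\ j|).+2.
Proof.
move=> iA jA; have jA' : j \in A :\ i by rewrite !inE eq_sym hij.
split; first by rewrite (big_setD1 i) //= (big_setD1 j) //= addrA.
by rewrite (cardsD1 i A) (cardsD1 j (A :\ i)) iA jA'.
Qed.

Lemma split1 (F : N -> rat) (A : {set N}) x : x \in A ->
  \sum_(m in A) F m = F x + \sum_(m in A :\ x) F m /\ #|A| = (#|A :\ x|).+1.
Proof. by move=> xA; rewrite (big_setD1 x) //= (cardsD1 x A) xA. Qed.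

Definition M T := ~: T :\ i :\ j.

Lemma inM T m : m \in M T -> [/\ m \notin T, m != i & m != j].
Proof. by rewrite !inE => /and3P[-> -> ->]. Qed.

Lemma card_sub T m : m \notin T -> (#|~: (m |: T)| < #|~: T|)%N.
Proof. by move=> mT; rewrite (@cardC_add _ m T mT). Qed.

Ltac setsolve x m T := apply/setP => x; rewrite !inE;
  by case: (x == i); case: (x == j); case: (x == m); case: (x \in T).

Lemma sUIJ_j T : (j |: T) :|: IJ = T :|: IJ.
Proof. setsolve x i T. Qed.
Lemma sUIJ_i T : (i |: T) :|: IJ = T :|: IJ.
Proof. setsolve x i T. Qed.
Lemma sIJ T : j |: (i |: T) = T :|: IJ.
Proof. setsolve x i T. Qed.
Lemma sIJ' T : i |: (j |: T) = T :|: IJ.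
Proof. setsolve x i T. Qed.
Lemma sm T m : (m |: T) :|: IJ = m |: (T :|: IJ).
Proof. setsolve x m T. Qed.
Lemma sMj T : ~: (j |: T) :\ i = M T.
Proof. setsolve x i T. Qed.
Lemma sMi T : ~: (i |: T) :\ j = M T.
Proof. setsolve x i T. Qed.

Lemma natr_neq0 (c : nat) : (c%:R + 1 : rat) != 0.
Proof. by rewrite natr1 pnatr_eq0. Qed.
Lemma natr_neq0' (c : nat) : (c%:R + 1 + 1 : rat) != 0.
Proof. by rewrite !natr1 pnatr_eq0. Qed.

Lemma IHcond n T m : (#|~: T| <= n.+1)%N -> m \notin T -> i \notin T -> j \notin T ->
  m != i -> m != j ->
  [/\ (#|~: (m |: T)| <= n)%N, i \notin m |: T & j \notin m |: T].
Proof.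
move=> hc mT iT jT mi mj; split.
- by rewrite -ltnS; apply: leq_trans (@card_sub T m mT) hc.
- by rewrite !inE negb_or (eq_sym i m) mi iT.
- by rewrite !inE negb_or (eq_sym j m) mj jT.
Qed.

Lemma Y n : forall T, (#|~: T| <= n)%N -> i \notin T -> j \notin T ->
  alpha Wh i T = alpha W j (i |: T) /\ alpha Wh i (j |: T) = alpha W j (i |: T).
Proof.
elim: n => [|n IH] T hc iT jT.
  exfalso; move: hc; rewrite leqn0 cards_eq0 => /eqP h.
  have : i \in ~: T by rewrite inE.
  by rewrite h inE.
have iC : i \in ~: T by rewrite inE.
have jC : j \in ~: T by rewrite inE.
have TWh : T \notin Wh by rewrite Wh_mem (negbTE iT).
have jTWh : j |: T \notin Wh by rewrite Wh_mem !inE (negbTE hij) (negbTE iT).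
have iTW : i |: T \notin W by apply: blk; rewrite !inE negb_or (eq_sym j i) hij jT.
have iT' : i \notin j |: T by rewrite !inE negb_or hij iT.
have jT' : j \notin i |: T by rewrite !inE negb_or (eq_sym j i) hij jT.
case hU: (T :|: IJ \in W).
  have a1 : alpha Wh i T = 1.
    by apply: alpha_dec => //; rewrite Wh_mem setU11 sUIJ_i.
  have a2 : alpha Wh i (j |: T) = 1.
    by apply: alpha_dec => //; rewrite Wh_mem setU11 sUIJ_i sUIJ_j.
  have a3 : alpha W j (i |: T) = 1 by apply: alpha_dec => //; rewrite sIJ.
  by rewrite a1 a2 a3.
have UW : T :|: IJ \notin W by rewrite hU.
set c := #|M T|.
have Ej : alpha Wh i (j |: T) =
    (\sum_(m in M T) alpha W j (i |: (m |: T))) / c.+1%:R.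
  have L1 : i |: (j |: T) \notin Wh by apply: loyalWh; rewrite // sUIJ_j.
  rewrite alpha_all //; last by move=> m _; apply: loyalWh; rewrite // sUIJ_j.
  have iC' : i \in ~: (j |: T) by rewrite inE.
  have [es ec] := @split1 (fun m => alpha Wh i (m |: (j |: T))) _ _ iC'.
  rewrite es ec sMj.
  have -> : alpha Wh i (i |: (j |: T)) = 0 by apply: alpha_uns; rewrite ?setU11.
  rewrite add0r; congr (_ / _); apply: eq_bigr => m /inM[mT mi mj].
  rewrite setUCA.
  have [h1 h2 h3] := @IHcond n T m hc mT iT jT mi mj.
  by case: (IH (m |: T) h1 h2 h3).
have Ei : alpha W j (i |: T) =
    (\sum_(m in M T) alpha W j (i |: (m |: T))) / c.+1%:R.
  have L1 : j |: (i |: T) \notin W by rewrite sIJ.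
  rewrite alpha_all //; last by move=> m _; apply: loyalW; rewrite // sUIJ_i.
  have jC' : j \in ~: (i |: T) by rewrite inE.
  have [es ec] := @split1 (fun m => alpha W j (m |: (i |: T))) _ _ jC'.
  rewrite es ec sMi.
  have -> : alpha W j (j |: (i |: T)) = 0 by apply: alpha_uns; rewrite ?setU11.
  rewrite add0r; congr (_ / _); apply: eq_bigr => m _.
  by rewrite setUCA.
split; last by rewrite Ej Ei.
rewrite Ei.
have L1 : i |: T \notin Wh by apply: loyalWh.
rewrite alpha_all //; last by move=> m _; apply: loyalWh.
have [es ec] := @split2 (fun m => alpha Wh i (m |: T)) _ iC jC.
rewrite es ec -/(M T) -/c Ej.
have -> : alpha Wh i (i |: T) = 0 by apply: alpha_uns; rewrite ?setU11.
have -> : \sum_(m in M T) alpha Wh i (m |: T) =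
          \sum_(m in M T) alpha W j (i |: (m |: T)).
  apply: eq_bigr => m /inM[mT mi mj].
  have [h1 h2 h3] := @IHcond n T m hc mT iT jT mi mj.
  by case: (IH (m |: T) h1 h2 h3).
set s := \sum_(m in M T) _.
rewrite -!natr1.
have h1 := natr_neq0 c; have h2 := natr_neq0' c.
field; by rewrite h1 h2.
Qed.

Lemma A n : forall U, (#|~: U| <= n)%N -> i \notin U -> j \notin U ->
  U :|: IJ \in W -> 1 <= alpha W i U + alpha W j U.
Proof.
elim: n => [|n IH] U hc iU jU hU.
  exfalso; move: hc; rewrite leqn0 cards_eq0 => /eqP h.
  have : i \in ~: U by rewrite inE.
  by rewrite h inE.
have iC : i \in ~: U by rewrite inE.
have jC : j \in ~: U by rewrite inE.
have UW : U \notin W by apply: blk.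
case hj: (j |: U \in W).
  have -> : alpha W j U = 1 by apply: alpha_dec.
  by rewrite lerDr alpha_ge0.
have jUW : j |: U \notin W by rewrite hj.
have iUW : i |: U \notin W by apply: blk; rewrite !inE negb_or (eq_sym j i) hij jU.
have loy : forall m, m \notin U -> m |: U \notin W.
  move=> m mU; case: (eqVneq m j) => [->|mj] //.
  by apply: blk; rewrite !inE negb_or eq_sym mj jU.
rewrite (@alpha_all _ _ _ _ UW iU iUW loy) (@alpha_all _ _ _ _ UW jU jUW loy).
have [es1 ec] := @split2 (fun m => alpha W i (m |: U)) _ iC jC.
have [es2 _] := @split2 (fun m => alpha W j (m |: U)) _ iC jC.
rewrite es1 es2 ec -/(M U).
have iT' : i \notin j |: U by rewrite !inE negb_or hij iU.
have jT' : j \notin i |: U by rewrite !inE negb_or (eq_sym j i) hij jU.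
have -> : alpha W i (i |: U) = 0 by apply: alpha_uns; rewrite ?setU11.
have -> : alpha W j (j |: U) = 0 by apply: alpha_uns; rewrite ?setU11.
have -> : alpha W i (j |: U) = 1 by apply: alpha_dec => //; rewrite sIJ'.
have -> : alpha W j (i |: U) = 1 by apply: alpha_dec => //; rewrite sIJ.
have hs : \sum_(m in M U) (1 : rat) <=
          \sum_(m in M U) (alpha W i (m |: U) + alpha W j (m |: U)).
  apply: ler_sum => m /inM[mT mi mj].
  have [h1 h2 h3] := @IHcond n U m hc mT iU jU mi mj.
  apply: IH => //; rewrite sm; apply: monoW hU; exact: subsetUr.
rewrite sumr_const big_split /= in hs.
rewrite -mulrDl ler_pdivlMr ?ltr0n // mul1r -!natr1.
lra.
Qed.

Lemma C n : forall T, (#|~: T| <= n)%N -> i \notin T -> j \notin T ->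
  T :|: IJ \notin W -> alpha Wh i T <= alpha W i T + alpha W j T.
Proof.
elim: n => [|n IH] T hc iT jT UW.
  exfalso; move: hc; rewrite leqn0 cards_eq0 => /eqP h.
  have : i \in ~: T by rewrite inE.
  by rewrite h inE.
have iC : i \in ~: T by rewrite inE.
have jC : j \in ~: T by rewrite inE.
have TW : T \notin W by apply: blk.
have TWh : T \notin Wh by rewrite Wh_mem (negbTE iT).
have iTW : i |: T \notin W by apply: loyalW.
have jTW : j |: T \notin W by apply: loyalW.
have loy : forall m, m \notin T -> m |: T \notin W by move=> m _; apply: loyalW.
have iTWh : i |: T \notin Wh by apply: loyalWh.
have loyh : forall m, m \notin T -> m |: T \notin Wh by move=> m _; apply: loyalWh.
rewrite (@alpha_all _ _ _ _ TW iT iTW loy) (@alpha_all _ _ _ _ TW jT jTW loy).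
rewrite (@alpha_all _ _ _ _ TWh iT iTWh loyh).
have [es1 ec] := @split2 (fun m => alpha W i (m |: T)) _ iC jC.
have [es2 _] := @split2 (fun m => alpha W j (m |: T)) _ iC jC.
have [es3 _] := @split2 (fun m => alpha Wh i (m |: T)) _ iC jC.
rewrite es1 es2 es3 ec -/(M T).
have -> : alpha W i (i |: T) = 0 by apply: alpha_uns; rewrite ?setU11.
have -> : alpha W j (j |: T) = 0 by apply: alpha_uns; rewrite ?setU11.
have -> : alpha Wh i (i |: T) = 0 by apply: alpha_uns; rewrite ?setU11.
have -> : alpha Wh i (j |: T) = alpha W j (i |: T).
  by case: (@Y #|~: T| T (leqnn _) iT jT).
have hs : \sum_(m in M T) alpha Wh i (m |: T) <=
          \sum_(m in M T) (alpha W i (m |: T) + alpha W j (m |: T)).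
  apply: ler_sum => m /inM[mT mi mj].
  have [h1 h2 h3] := @IHcond n T m hc mT iT jT mi mj.
  case hm: ((m |: T) :|: IJ \in W).
    apply: le_trans (alpha_le1 _ _ _ _) _; exact: (@A n (m |: T) h1 h2 h3 hm).
  by apply: IH => //; rewrite hm.
rewrite big_split /= in hs.
have := @alpha_ge0 _ W i (j |: T).
rewrite -mulrDl => h0.
apply: ler_wpM2r; first by rewrite invr_ge0 ler0n.
lra.
Qed.

End Main.

Theorem claim1 (N : finType) (W : {set {set N}}) (i j : N) (S : {set N}) :
  svg W -> i != j -> yes_blocker W j ->
  S \subset ~: [set i; j] -> S :|: [set i; j] \notin W ->
  alpha_no (donate W i j) i S <= alpha_no W i S + alpha_no W j S.
Proof.
move=> hW hij hblk sS hU.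
have iS : i \notin S.
  by apply/negP => /(subsetP sS); rewrite !inE eqxx.
have jS : j \notin S.
  by apply/negP => /(subsetP sS); rewrite !inE eqxx orbT.
rewrite /alpha_no (negbTE iS) (negbTE jS).
exact: (@C N W i j hW hij hblk #|~: S| S (leqnn _) iS jS hU).
Qed.
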